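(* Let $G$ be a group acting on a set $X$, and let $\alpha\in\,]0,1]$. (1) Let $A\subset G$ and $Y\subset X$ be finite nonempty subsets such that $|A\cdot Y|\leq(2-\alpha)|Y|$. Then $A^{-1}A\subset\mathrm{Sym}_{\alpha}(Y)$. (2) Let $(\rho,V)$ be a linear representation of $G$ on a finite-dimensional vector space $V$ over a field $k$, let $A\subset G$ and let $W$ be a finite-dimensional $k$-subspace of $V$ such that $\dim\langle A\cdot W\rangle\leq(2-\alpha)\dim W$. Then $A^{-1}A\subset\mathrm{Sym}_{\alpha}(W)$.
   Context: $g\cdot x$ denotes the action of $g\in G$ on $x\in X$ (resp. on $v\in V$). For $A\subset G$, $Y\subset X$: $A\cdot Y=\{a\cdot y\mid a\in A,\ y\in Y\}$. For a subspace $W$: $A\cdot W$ denotes the set $\{a\cdot w\mid a\in A, w\in W\}$ and $\langle A\cdot W\rangle$ its $k$-linear span; $A^{-1}A=\{a^{-1}b\mid a,b\in A\}$. For a finite nonempty $Y\subset X$, $\mathrm{Sym}_{\alpha}(Y)=\{g\in G\mid |g\cdot Y\cap Y|\geq\alpha|Y|\}$. For a subspace $W$, $\mathrm{Sym}_{\alpha}(W)=\{g\in G\mid \dim(g\cdot W\cap W)\geq\alpha\dim W\}$. *)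

(* Defs.v *)
From HB Require Import structures.
From mathcomp Require Import all_boot all_order all_algebra.
From mathcomp Require Import finmap.
Set Implicit Arguments. Unset Strict Implicit. Unset Printing Implicit Defensive.
Import Order.TTheory GRing.Theory Num.Theory.

Local Open Scope group_scope.

Definition is_action (G : groupType) (X : Type) (act : G -> X -> X) : Prop :=
  (forall x, act 1 x = x) /\
  (forall g h x, act (g * h) x = act g (act h x)).

(** A linear representation rho of G on the finite-dimensional k-space V
    (a group homomorphism G -> GL(V); rho g is then automatically invertible). *)
Definition is_representation (G : groupType) (k : fieldType) (V : vectType k)
    (rho : G -> 'End(V)) : Prop :=
  rho 1 = \1%VF /\ (forall g h, rho (g * h) = (rho g \o rho h)%VF).

Local Close Scope group_scope.
Local Open Scope fset_scope.
Local Open Scope ring_scope.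

Definition act_fset (G : groupType) (X : choiceType) (act : G -> X -> X)
    (A : {fset G}) (Y : {fset X}) : {fset X} :=
  [fset act a y | a in A, y in Y].

Definition Sym_set (R : realFieldType) (G : groupType) (X : choiceType)
    (act : G -> X -> X) (alpha : R) (Y : {fset X}) (g : G) : Prop :=
  alpha * (#|` Y|)%:R <= (#|` (act g @` Y) `&` Y|)%:R.

Definition Sym_space (R : realFieldType) (G : groupType) (k : fieldType)
    (V : vectType k) (rho : G -> 'End(V)) (alpha : R) (W : {vspace V}) (g : G)
    : Prop :=
  alpha * (\dim W)%:R <= (\dim ((rho g @: W) :&: W)%VS)%:R.

Definition is_span_act (G : groupType) (k : fieldType) (V : vectType k)
    (rho : G -> 'End(V)) (A : G -> Prop) (W : {vspace V}) (U : {vspace V})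
    : Prop :=
  (forall a, A a -> (rho a @: W <= U)%VS) /\
  (forall U' : {vspace V}, (forall a, A a -> (rho a @: W <= U')%VS) ->
     (U <= U')%VS).

(* Main.v *)
Require Import Defs.
From HB Require Import structures.
From mathcomp Require Import all_boot all_order all_algebra.
From mathcomp Require Import finmap.
From mathcomp Require Import lra.
Import Order.TTheory GRing.Theory Num.Theory.
Local Open Scope fset_scope.
Local Open Scope ring_scope.

Section Rep.
Variables (G : groupType) (k : fieldType) (V : vectType k) (rho : G -> 'End(V)).
Hypothesis hr : is_representation rho.

Lemma rep_img (g h : G) (W : {vspace V}) : (rho (g * h)%g @: W = rho g @: (rho h @: W))%VS.
Proof. by case: hr => _ ->; rewrite limg_comp. Qed.

Lemma rep_lker (g : G) : lker (rho g) == 0%VS.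
Proof.
apply/lker0P => x y e.
have := congr1 (rho (g^-1)%g) e.
case: hr => h1 hM.
have E z : rho (g^-1)%g (rho g z) = z.
  by rewrite -comp_lfunE -hM mulVg h1 id_lfunE.
by rewrite !E.
Qed.

Lemma rep_dim (g : G) (W : {vspace V}) : \dim (rho g @: W) = \dim W.
Proof. by apply: limg_dim_eq; rewrite (eqP (rep_lker g)) capv0. Qed.
End Rep.

Lemma injact (G : groupType) (X : choiceType) (act : G -> X -> X) :
  is_action act -> forall g, injective (act g).
Proof.
move=> [h1 hM] g x y e.
have := congr1 (act (g^-1)%g) e.
by rewrite -!hM mulVg !h1.
Qed.

Lemma realfact (R : realFieldType) (alpha : R) (y u c : nat) :
  (u%:R <= (2 - alpha) * y%:R) -> (u + c = y + y)%N -> alpha * y%:R <= c%:R.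
Proof.
move=> H e.
have : (u%:R + c%:R = y%:R + y%:R :> R) by rewrite -!natrD e.
move=> e'. rewrite mulrBl in H. lra.
Qed.

Theorem mainTheorem1 (R : realFieldType) (G : groupType) (alpha : R)
  (halpha : 0 < alpha <= 1) :
  (forall (X : choiceType) (act : G -> X -> X), is_action act ->
     forall (A : {fset G}) (Y : {fset X}),
       A != fset0 -> Y != fset0 ->
       (#|` act_fset act A Y|)%:R <= (2 - alpha) * (#|` Y|)%:R ->
       forall a b, a \in A -> b \in A ->
         Sym_set act alpha Y (((a ^-1) * b)%g))
  /\
  (forall (k : fieldType) (V : vectType k) (rho : G -> 'End(V)),
     is_representation rho ->
     forall (A : G -> Prop) (W : {vspace V}),
       (exists U : {vspace V}, is_span_act rho A W U /\
          (\dim U)%:R <= (2 - alpha) * (\dim W)%:R) ->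
       forall a b, A a -> A b ->
         Sym_space rho alpha W (((a ^-1) * b)%g)).
Proof.
split.
  move=> X act ha A Y _ _ H a b aA bA; rewrite /Sym_set.
  have cardi g : #|` act g @` Y| = #|` Y|.
    by apply/eqP/card_in_imfsetP => x y _ _; apply: injact.
  have sub : (act a @` Y `|` act b @` Y) `<=` act_fset act A Y.
    apply/fsubsetP => x; rewrite inE => /orP[] /imfsetP[y yY ->];
      by apply: in_imfset2.
  have sub2 : act (a^-1)%g @` (act a @` Y `&` act b @` Y) `<=`
              act (a^-1 * b)%g @` Y `&` Y.
    apply/fsubsetP => x /imfsetP[z]; rewrite /= inE => /andP[].
    move=> /imfsetP[y yY ->] /imfsetP[y' y'Y e] ->.
    case: ha => h1 hM.
    rewrite inE; apply/andP; split.
      by rewrite e -hM; apply: in_imfset.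
    by rewrite -hM mulVg h1.
  have c2 : #|` act (a^-1)%g @` (act a @` Y `&` act b @` Y)| =
            #|` act a @` Y `&` act b @` Y|.
    by apply/eqP/card_in_imfsetP => x y _ _; apply: injact.
  have L1 := fsubset_leq_card sub. have L2 := fsubset_leq_card sub2.
  rewrite c2 in L2.
  have E := cardfsUI (act a @` Y) (act b @` Y). rewrite !cardi in E.
  apply: le_trans (_ : (#|` act a @` Y `&` act b @` Y|)%:R <= _); last by rewrite ler_nat.
  apply: (@realfact _ _ _ (#|` act a @` Y `|` act b @` Y|)) E.
  apply: le_trans H; by rewrite ler_nat.
move=> k V rho hr A W [U [[hU _] HU]] a b Aa Ab; rewrite /Sym_space.
have sub : (rho a @: W + rho b @: W <= U)%VS by rewrite subv_add !hU.
have E := dimv_sum_cap (rho a @: W) (rho b @: W). rewrite !rep_dim // in E.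
have e1 : (rho (a^-1 * b)%g @: W :&: W = rho (a^-1)%g @: (rho a @: W :&: rho b @: W))%VS.
  rewrite lker0_img_cap ?rep_lker // -!(@rep_img _ _ _ _ hr) mulVg.
  by case: hr => h1 _; rewrite h1 (lim1g W) capvC.
rewrite e1 rep_dim //.
apply: (@realfact _ _ _ (\dim (rho a @: W + rho b @: W))) E.
apply: le_trans HU; rewrite ler_nat; exact: dimvS.
Qed.
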